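(* Let $A$ be an integral domain containing $\mathbb{Q}$, let $R:=A/\mathbb{Q}^\times$ be the quotient hyperring, $\pi:A\to R$ the canonical projection, $X=(\operatorname{Spec}A,\mathcal{O}_X)$ the usual affine scheme and $Y=(\operatorname{Spec}R,\mathcal{O}_Y)$ the hyperring scheme of $R$. Then: (1) the map $\varphi:\operatorname{Spec}R\to\operatorname{Spec}A$, $\mathfrak{p}\mapsto\pi^{-1}(\mathfrak{p})$, is a homeomorphism; (2) for every nonempty open subset $U\subseteq X$, $\mathcal{O}_Y(\varphi^{-1}(U))\cong\mathcal{O}_X(U)/\mathbb{Q}^\times$ as hyperrings.
   Context: For a commutative ring $B$ and a subgroup $G$ of its unit group, the quotient hyperring $B/G$ is the set of cosets $bG$ with $(xG)(yG)=xyG$ and $xG+yG=\{qG\mid q=xt+ys,\ t,s\in G\}$; for nonempty $U$, $\mathcal{O}_X(U)$ is an integral domain containing $\mathbb{Q}$, so $\mathcal{O}_X(U)/\mathbb{Q}^\times$ is defined. $R$ is a hyperring without zero-divisors. Hyperrings, hyperideals ($a-rb\subseteq I$ for $a,b\in I$), prime hyperideals, and $\operatorname{Spec}R$ with the Zariski topology (closed sets $V(I)$) are as for rings. For a multiplicative submonoid $T$ of $R$, $T^{-1}R$ is $R\times T$ modulo $(r_1,t_1)\sim(r_2,t_2)\iff xr_1t_2=xr_2t_1$ for some $x\in T$, with $\frac{r_1}{t_1}+\frac{r_2}{t_2}=\{\frac y{t_1t_2}\mid y\in r_1t_2+t_1r_2\}$ and componentwise multiplication; $R_\mathfrak{p}=(R\setminus\mathfrak{p})^{-1}R$.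 The sheaf $\mathcal{O}_Y$: $\mathcal{O}_Y(V)$ is the set of maps $s:V\to\bigsqcup_{\mathfrak{p}\in V}R_\mathfrak{p}$, $s(\mathfrak{p})\in R_\mathfrak{p}$, such that each point of $V$ has a neighbourhood on which $s(\mathfrak{q})=\frac af$ for fixed $a,f\in R$ with $f\notin\mathfrak{q}$; multiplication is pointwise and $s+t=\{r\mid r(\mathfrak{p})\in s(\mathfrak{p})+t(\mathfrak{p})\ \forall\mathfrak{p}\in V\}$. *)

(* Defs.v *)
From HB Require Import structures.
From mathcomp Require Import all_boot all_algebra.
From mathcomp Require Import boolp classical_sets.

Set Implicit Arguments.
Unset Strict Implicit.
Unset Printing Implicit Defensive.

Import GRing.Theory.
Local Open Scope classical_set_scope.

Record hstruct := HStruct {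
  hcar :> Type;
  hadd : hcar -> hcar -> set hcar;
  hmul : hcar -> hcar -> hcar;
  hneg : hcar -> hcar }.

(* Choice of an element satisfying P (default d if none exists).  Used to
   turn operations defined "via representatives" into functions. *)
Definition pick_or {T : Type} (d : T) (P : T -> Prop) : T :=
  match pselect (exists x, P x) with
  | left h => proj1_sig (cid h)
  | right _ => d
  end.

Definition ring_hs (A : comNzRingType) : hstruct :=
  @HStruct A (fun x y => [set (x + y)%R]) (fun x y => (x * y)%R) (fun x => (- x)%R).

Definition hiso (B C : hstruct) : Prop :=
  exists g : B -> C, bijective g /\
    (forall x y, g (hmul x y) = hmul (g x) (g y)) /\
    (forall x y, g @` hadd x y = hadd (g x) (g y)).

Section HyperSpec.
Variable H : hstruct.

Definition hyperideal (I : set H) : Prop :=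
  I !=set0 /\ forall a b r, I a -> I b -> hadd a (hneg (hmul r b)) `<=` I.

Definition prime_hideal (I : set H) : Prop :=
  hyperideal I /\ I <> setT /\ forall x y, I (hmul x y) -> I x \/ I y.

Definition Spec := {p : set H | prime_hideal p}.

Definition zclosed (W : set Spec) : Prop :=
  exists I, hyperideal I /\ W = [set p | I `<=` proj1_sig p].
Definition zopen (W : set Spec) : Prop := zclosed (~` W).

(* Localization R_p = (R \ p)^{-1} R : classes of pairs (r, t), t ∉ p. *)
Definition cls (p : Spec) (r t : H) : set (H * H) :=
  [set rt | ~ proj1_sig p rt.2 /\
     exists x, ~ proj1_sig p x /\ hmul x (hmul r rt.2) = hmul x (hmul rt.1 t)].

Definition isrep (p : Spec) (c : set (H * H)) (r t : H) : Prop :=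
  ~ proj1_sig p t /\ c = cls p r t.

Definition loc (p : Spec) := {c : set (H * H) | exists r t, isrep p c r t}.

Definition lmul (p : Spec) (c d : loc p) : loc p :=
  pick_or c (fun e => exists r1 t1 r2 t2,
    isrep p (proj1_sig c) r1 t1 /\ isrep p (proj1_sig d) r2 t2 /\
    proj1_sig e = cls p (hmul r1 r2) (hmul t1 t2)).

Definition ladd (p : Spec) (c d : loc p) : set (loc p) :=
  [set e | exists r1 t1 r2 t2 y,
    isrep p (proj1_sig c) r1 t1 /\ isrep p (proj1_sig d) r2 t2 /\
    hadd (hmul r1 t2) (hmul t1 r2) y /\
    proj1_sig e = cls p y (hmul t1 t2)].

Definition lneg (p : Spec) (c : loc p) : loc p :=
  pick_or c (fun e => exists r t,
    isrep p (proj1_sig c) r t /\ proj1_sig e = cls p (hneg r) t).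

(* Structure sheaf: sections over V ⊆ Spec that are locally fractions a/f. *)
Definition pt (V : set Spec) := {p : Spec | V p}.

Definition islocfrac (V : set Spec) (s : forall q : pt V, loc (proj1_sig q)) : Prop :=
  forall q : pt V, exists W, zopen W /\ W (proj1_sig q) /\
    exists a f, forall q' : pt V, W (proj1_sig q') ->
      ~ proj1_sig (proj1_sig q') f /\
      proj1_sig (s q') = cls (proj1_sig q') a f.

Definition sect (V : set Spec) :=
  {s : forall q : pt V, loc (proj1_sig q) | islocfrac s}.

Definition smul (V : set Spec) (s t : sect V) : sect V :=
  pick_or s (fun r => forall q, proj1_sig r q = lmul (proj1_sig s q) (proj1_sig t q)).

Definition sadd (V : set Spec) (s t : sect V) : set (sect V) :=
  [set r | forall q, ladd (proj1_sig s q) (proj1_sig t q) (proj1_sig r q)].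

Definition sneg (V : set Spec) (s : sect V) : sect V :=
  pick_or s (fun r => forall q, proj1_sig r q = lneg (proj1_sig s q)).

Definition OS (V : set Spec) : hstruct :=
  @HStruct (sect V) (@sadd V) (@smul V) (@sneg V).

(* Quotient hyperring B/G (G a multiplicative subgroup of units of B). *)
Variable G : set H.

Definition hcoset (b : H) : set H := [set hmul b g | g in G].

Definition qcar := {S : set H | exists b, S = hcoset b}.

Definition qmul (X Y : qcar) : qcar :=
  pick_or X (fun Z => exists x y, proj1_sig X = hcoset x /\
    proj1_sig Y = hcoset y /\ proj1_sig Z = hcoset (hmul x y)).

Definition qadd (X Y : qcar) : set qcar :=
  [set Z | exists x y t s q, proj1_sig X = hcoset x /\ proj1_sig Y = hcoset y /\
     G t /\ G s /\ hadd (hmul x t) (hmul y s) q /\ proj1_sig Z = hcoset q].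

Definition qneg (X : qcar) : qcar :=
  pick_or X (fun Z => exists x, proj1_sig X = hcoset x /\
    proj1_sig Z = hcoset (hneg x)).

Definition quot : hstruct := @HStruct qcar qadd qmul qneg.

Definition qproj (b : H) : quot := exist _ (hcoset b) (ex_intro _ b erefl).

End HyperSpec.

Definition QA (A : idomainType) : set (ring_hs A) :=
  [set a | exists q : rat, q != 0%R /\ a = ratr q].

Definition QX (A : idomainType) (U : set (Spec (ring_hs A))) : set (OS U) :=
  [set s | exists q : rat, q != 0%R /\
     forall x, proj1_sig (proj1_sig s x) = cls (proj1_sig x) (ratr q : ring_hs A) 1%R].

Arguments QA : clear implicits.
Arguments QX {A} U.

(* Main.v *)
Require Import Defs.
From HB Require Import structures.
From mathcomp Require Import all_boot all_algebra.
From mathcomp Require Import boolp classical_sets.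
From mathcomp Require Import ring.
Set Implicit Arguments.
Unset Strict Implicit.
Unset Printing Implicit Defensive.
Local Open Scope classical_set_scope.

Lemma pick_orP {T : Type} (d : T) (P : T -> Prop) : (exists x, P x) -> P (pick_or d P).
Proof. rewrite /pick_or; case: pselect => // h _; exact: proj2_sig (cid h). Qed.

Lemma sig_eq {T : Type} {P : T -> Prop} (x y : {a | P a}) :
  proj1_sig x = proj1_sig y -> x = y.
Proof. case: x y => [a pa] [b pb] /= E; subst; congr exist; exact: Prop_irrelevance. Qed.

Record GenHyp (H : hstruct) := GenHypB {
  ge : H; gz : H;
  gmulA : forall x y w : H, hmul x (hmul y w) = hmul (hmul x y) w;
  gmulC : forall x y : H, hmul x y = hmul y x;
  gmul1 : forall x : H, hmul ge x = x;
  gmul0 : forall x : H, hmul gz x = gz;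
  gmulI : forall x y w : H, x <> gz -> hmul x y = hmul x w -> y = w;
  gprime_e : forall p : Spec H, ~ proj1_sig p ge;
  gprime_z : forall p : Spec H, proj1_sig p gz;
  geta : Spec H;
  getaE : proj1_sig geta = [set gz];
  gDopen : forall g, zopen [set q : Spec H | ~ proj1_sig q g] }.

Section Gen.
Variable H : hstruct.
Variable GH : GenHyp H.
Local Notation e := (ge GH).
Local Notation z := (gz GH).
Local Notation mulA := (@gmulA _ GH).
Local Notation mulC := (@gmulC _ GH).
Local Notation mul1 := (@gmul1 _ GH).
Local Notation mul0 := (@gmul0 _ GH).
Local Notation mulI := (@gmulI _ GH).
Local Notation prime_e := (@gprime_e _ GH).
Local Notation prime_z := (@gprime_z _ GH).
Local Notation eta := (geta GH).
Local Notation etaE := (getaE GH).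
Local Notation Dopen := (@gDopen _ GH).

Lemma mulCA (x y w : H) : hmul x (hmul y w) = hmul y (hmul x w).
Proof. by rewrite mulA (mulC x y) -mulA. Qed.

Lemma stepL (x y R R' : H) : R = hmul x R' -> hmul y R = hmul x (hmul y R').
Proof. by move->; rewrite mulCA. Qed.
Lemma cancel_front (x L R R' : H) : R = hmul x R' -> L = R' -> hmul x L = R.
Proof. by move=> -> ->. Qed.

Ltac find := first [ reflexivity | exact: mulC | apply: stepL; find ].
Ltac acl := first [ reflexivity |
  match goal with |- hmul ?x ?L = ?R => apply: (@cancel_front x L R); [find | acl] end ].
Ltac ac := rewrite -?mulA; acl.

Lemma notp_mul (p : Spec H) (x y : H) : ~ proj1_sig p x -> ~ proj1_sig p y ->
  ~ proj1_sig p (hmul x y).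
Proof. case: p => P [_ [_ HP]] /= hx hy /HP []; by []. Qed.

Lemma cls_sub (p : Spec H) (r t r' t' u : H) : ~ proj1_sig p t -> ~ proj1_sig p t' -> ~ proj1_sig p u ->
  hmul u (hmul r t') = hmul u (hmul r' t) -> cls p r t `<=` cls p r' t'.
Proof.
move=> ht ht' hu E [r2 t2] /= [ht2 [x [hx Ex]]]; split => //.
exists (hmul (hmul x u) t); split; first by do 2?apply: notp_mul.
have E1 : hmul (hmul (hmul x u) t) (hmul r' t2)
         = hmul (hmul x t2) (hmul u (hmul r' t)) by ac.
rewrite E1 -E.
have E2 : hmul (hmul x t2) (hmul u (hmul r t')) = hmul (hmul u t') (hmul x (hmul r t2)) by ac.
rewrite E2 Ex; ac.
Qed.

Lemma cls_eq (p : Spec H) (r t r' t' u : H) : ~ proj1_sig p t -> ~ proj1_sig p t' -> ~ proj1_sig p u ->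
  hmul u (hmul r t') = hmul u (hmul r' t) -> cls p r t = cls p r' t'.
Proof.
move=> ht ht' hu E; apply/seteqP; split; first exact: cls_sub E.
exact: cls_sub (esym E).
Qed.

Lemma cls_refl (p : Spec H) (r t : H) : ~ proj1_sig p t -> cls p r t (r, t).
Proof. move=> ht; split => //; exists e; split => //; exact: prime_e. Qed.

Lemma cls_inv (p : Spec H) (r t r' t' : H) : ~ proj1_sig p t' ->
  cls p r t = cls p r' t' -> exists u, ~ proj1_sig p u /\ hmul u (hmul r t') = hmul u (hmul r' t).
Proof. by move=> ht' E; have := cls_refl r' ht'; rewrite -E => -[_]. Qed.

Lemma not_z (p : Spec H) (x : H) : ~ proj1_sig p x -> x <> z.
Proof. by move=> h E; apply: h; rewrite E; exact: prime_z. Qed.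

Lemma neta (x : H) : ~ proj1_sig eta x <-> x <> z.
Proof. by rewrite etaE. Qed.

Lemma cls_eta_inv (r t r' t' : H) : t' <> z ->
  cls eta r t = cls eta r' t' -> hmul r t' = hmul r' t.
Proof.
move=> ht' E; have [u [hu Eu]] := cls_inv (proj2 (neta _) ht') E.
exact: mulI (not_z hu) Eu.
Qed.

Lemma cls_eq1 (p : Spec H) (r t r' t' : H) : ~ proj1_sig p t -> ~ proj1_sig p t' ->
  hmul r t' = hmul r' t -> cls p r t = cls p r' t'.
Proof. by move=> ht ht' E; apply: (cls_eq (u := e)) => //; [exact: prime_e | rewrite !mul1]. Qed.

Lemma loc_rep (p : Spec H) (c : loc p) : exists r t, isrep p (proj1_sig c) r t.
Proof. exact: proj2_sig c. Qed.

Lemma open_eta (W : set (Spec H)) (q : Spec H) : zopen W -> W q -> W eta.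
Proof.
move=> [I [_ EI]] Wq; apply: contrapT => Ne.
have : (~` W) eta by [].
rewrite EI /= etaE => sI.
have : (~` W) q by rewrite EI => x /sI ->; exact: prime_z.
by [].
Qed.

Variable V : set (Spec H).
Hypothesis Veta : V eta.
Definition etaV : pt V := exist _ eta Veta.

Lemma ge1 (s : sect V) (q : pt V) (a f : H) : ~ proj1_sig (proj1_sig q) f ->
  proj1_sig (proj1_sig s q) = cls (proj1_sig q) a f ->
  proj1_sig (proj1_sig s etaV) = cls eta a f.
Proof.
move=> hf Eq; have [W [oW [Wq [a0 [f0 Hloc]]]]] := proj2_sig s q.
have [hf0 E0] := Hloc q Wq.
rewrite Eq in E0.
have [u [hu Eu]] := cls_inv hf0 E0.
have E1 := mulI (not_z hu) Eu.
have We : W (proj1_sig etaV) by exact: open_eta oW Wq.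
have [hf0' ->] := Hloc etaV We.
apply: cls_eq1 => //=; apply/neta; exact: not_z hf.
Qed.

Lemma ge2 (s : sect V) (q : pt V) (a f : H) : ~ proj1_sig (proj1_sig q) f ->
  proj1_sig (proj1_sig s etaV) = cls eta a f ->
  proj1_sig (proj1_sig s q) = cls (proj1_sig q) a f.
Proof.
move=> hf Ee; have [a0 [f0 [hf0 E0]]] := loc_rep (proj1_sig s q).
have := ge1 hf0 E0; rewrite Ee => E.
have E1 := cls_eta_inv (not_z hf0) E.
by rewrite E0; apply: cls_eq1.
Qed.

Lemma ge3 (s : sect V) (q : pt V) (a f : H) : f <> z ->
  proj1_sig (proj1_sig s etaV) = cls eta a f ->
  exists a' f', ~ proj1_sig (proj1_sig q) f' /\
    proj1_sig (proj1_sig s q) = cls (proj1_sig q) a' f' /\ hmul a' f = hmul a f'.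
Proof.
move=> hf Ee; have [a0 [f0 [hf0 E0]]] := loc_rep (proj1_sig s q).
exists a0, f0; split => //; split => //.
have := ge1 hf0 E0; rewrite Ee => E.
by rewrite (cls_eta_inv (not_z hf0) E).
Qed.

Lemma sect_ext (s1 s2 : sect V) :
  proj1_sig (proj1_sig s1 etaV) = proj1_sig (proj1_sig s2 etaV) -> s1 = s2.
Proof.
move=> Ee; apply: sig_eq; apply: functional_extensionality_dep => q.
apply: sig_eq.
have [a [f [hf E1]]] := loc_rep (proj1_sig s1 etaV).
have hfz : f <> z by move/neta: hf.
have [a' [f' [hf' [Eq E']]]] := ge3 q hfz E1.
rewrite Eq; apply/esym/ge2 => //.
rewrite -Ee E1; apply: cls_eq1 => //; exact/neta/(not_z hf').
Qed.

Lemma lmul_eval (p : Spec H) (c d : loc p) (r1 t1 r2 t2 : H) :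
  isrep p (proj1_sig c) r1 t1 -> isrep p (proj1_sig d) r2 t2 ->
  proj1_sig (lmul c d) = cls p (hmul r1 r2) (hmul t1 t2).
Proof.
move=> [h1 E1] [h2 E2].
have h12 : ~ proj1_sig p (hmul t1 t2) by exact: notp_mul.
have Hex : exists e0 : loc p, exists r1 t1 r2 t2,
    isrep p (proj1_sig c) r1 t1 /\ isrep p (proj1_sig d) r2 t2 /\
    proj1_sig e0 = cls p (hmul r1 r2) (hmul t1 t2).
  exists (exist _ (cls p (hmul r1 r2) (hmul t1 t2)) (ex_intro _ _ (ex_intro _ _ (conj h12 erefl)))).
  by exists r1, t1, r2, t2.
rewrite /lmul; have := @pick_orP _ c _ Hex.
move=> [r1' [t1' [r2' [t2' [[h1' E1'] [[h2' E2'] ->]]]]]].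
rewrite E1 in E1'; rewrite E2 in E2'.
have [u1 [hu1 Eu1]] := cls_inv h1' E1'.
have [u2 [hu2 Eu2]] := cls_inv h2' E2'.
apply: (cls_eq (u := hmul u1 u2)); [exact: notp_mul | exact: h12 | exact: notp_mul |].
have -> : hmul (hmul u1 u2) (hmul (hmul r1' r2') (hmul t1 t2)) =
          hmul (hmul u1 (hmul r1' t1)) (hmul u2 (hmul r2' t2)) by ac.
rewrite -Eu1 -Eu2; ac.
Qed.

Lemma mul_nz (x y : H) : x <> z -> y <> z -> hmul x y <> z.
Proof. by move=> hx hy E; apply: hy; apply: (mulI hx); rewrite E mulC mul0. Qed.

Lemma locfrac_mk (a0 f0 : H) (s : forall q : pt V, loc (proj1_sig q)) : f0 <> z ->
  (forall q : pt V, exists b g, ~ proj1_sig (proj1_sig q) g /\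
     proj1_sig (s q) = cls (proj1_sig q) b g /\ hmul b f0 = hmul a0 g) ->
  islocfrac s.
Proof.
move=> hf0 Hs q; have [b [g [hg [Eq Eb]]]] := Hs q.
exists [set q : Spec H | ~ proj1_sig q g]; split; first exact: Dopen.
split => //; exists b, g => q' hq'; split => //.
have [b' [g' [hg' [Eq' Eb']]]] := Hs q'.
rewrite Eq'; apply: cls_eq1 => //.
apply: (mulI hf0).
have -> : hmul f0 (hmul b' g) = hmul (hmul b' f0) g by ac.
have -> : hmul f0 (hmul b g') = hmul (hmul b f0) g' by ac.
rewrite Eb Eb'; ac.
Qed.

Lemma mul_sect_ex (s t : sect V) : exists r : sect V,
  forall q, proj1_sig r q = lmul (proj1_sig s q) (proj1_sig t q).
Proof.
have [a [f [hf E1]]] := loc_rep (proj1_sig s etaV).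
have [b [g [hg E2]]] := loc_rep (proj1_sig t etaV).
have hfz : f <> z by move/neta: hf.
have hgz : g <> z by move/neta: hg.
have Hl : islocfrac (fun q => lmul (proj1_sig s q) (proj1_sig t q)).
  apply: (@locfrac_mk (hmul a b) (hmul f g)).
    exact: mul_nz.
  move=> q; have [a' [f' [hf' [Eq Ea]]]] := ge3 q hfz E1.
  have [b' [g' [hg' [Eq' Eb]]]] := ge3 q hgz E2.
  exists (hmul a' b'), (hmul f' g'); split; first exact: notp_mul.
  split; first exact: lmul_eval.
  have -> : hmul (hmul a' b') (hmul f g) = hmul (hmul a' f) (hmul b' g) by ac.
  rewrite Ea Eb; ac.
by exists (exist _ _ Hl).
Qed.

Lemma smul_eval (s t : sect V) q :
  proj1_sig (smul s t) q = lmul (proj1_sig s q) (proj1_sig t q).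
Proof.
by rewrite /smul; have := @pick_orP _ s _ (mul_sect_ex s t) => ->.
Qed.
Lemma smul_eta (s t : sect V) (a f b g : H) :
  isrep eta (proj1_sig (proj1_sig s etaV)) a f ->
  isrep eta (proj1_sig (proj1_sig t etaV)) b g ->
  proj1_sig (proj1_sig (smul s t) etaV) = cls eta (hmul a b) (hmul f g).
Proof. by move=> h1 h2; rewrite smul_eval; exact: lmul_eval. Qed.
End Gen.

Section Quot.
Variable H : hstruct.
Variable G : set H.
Variable e : H.
Hypothesis mulA : forall x y w : H, hmul x (hmul y w) = hmul (hmul x y) w.
Hypothesis mulC : forall x y : H, hmul x y = hmul y x.
Hypothesis mul1 : forall x : H, hmul e x = x.
Hypothesis Ge : G e.
Hypothesis GM : forall g h, G g -> G h -> G (hmul g h).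
Hypothesis GV : forall g, G g -> exists g', G g' /\ hmul g g' = e.

Lemma hcoset_in (x : H) : hcoset G x x.
Proof. by exists e => //; rewrite mulC mul1. Qed.

Lemma hcoset_eqP (x y : H) : hcoset G x = hcoset G y <-> exists g, G g /\ y = hmul x g.
Proof.
split.
  by move=> E; have := hcoset_in y; rewrite -E => -[g Gg <-]; exists g.
move=> [g [Gg ->]]; apply/seteqP; split => w.
  move=> [h Gh <-]; have [g' [Gg' Eg]] := GV Gg.
  exists (hmul g' h); first exact: GM.
  by rewrite -mulA (mulA g) Eg mul1.
by move=> [h Gh <-]; exists (hmul g h); [exact: GM | rewrite mulA].
Qed.

Lemma qproj_eq (x y : H) : qproj G x = qproj G y <-> hcoset G x = hcoset G y.
Proof. by split => [[]|E] //; apply: sig_eq. Qed.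

Lemma qproj_surj (X : quot G) : exists b, X = qproj G b.
Proof. by case: X => S [b E]; exists b; apply: sig_eq. Qed.

Lemma qmul_proj (x y : H) :
  @hmul (quot G) (qproj G x) (qproj G y) = qproj G (hmul x y).
Proof.
have Hex : exists Z : qcar G, exists x' y', proj1_sig (qproj G x) = hcoset G x' /\
    proj1_sig (qproj G y) = hcoset G y' /\ proj1_sig Z = hcoset G (hmul x' y').
  by exists (qproj G (hmul x y)), x, y.
have := @pick_orP _ (qproj G x) _ Hex.
move=> [x' [y' [/= /hcoset_eqP [g [Gg ->]] [/hcoset_eqP [h [Gh ->]] E]]]].
apply: sig_eq; rewrite [LHS]E /=; symmetry; apply/hcoset_eqP.
exists (hmul g h); split; first exact: GM.
by rewrite -mulA (mulA g) (mulC g y) -mulA mulA.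
Qed.

Lemma qadd_proj (x y : H) (Z : quot G) :
  @hadd (quot G) (qproj G x) (qproj G y) Z <->
  exists t s q, G t /\ G s /\ hadd (hmul x t) (hmul y s) q /\ Z = qproj G q.
Proof.
split.
  move=> [x' [y' [t [s [q [/hcoset_eqP [g [Gg ->]] [/hcoset_eqP [h [Gh ->]]
    [Gt [Gs [Hq EZ]]]]]]]]]].
  exists (hmul g t), (hmul h s), q; split; first exact: GM.
  split; first exact: GM.
  by rewrite !mulA; split => //; apply: sig_eq.
move=> [t [s [q [Gt [Gs [Hq ->]]]]]].
by exists x, y, t, s, q.
Qed.
End Quot.

Import GRing.Theory.
Local Open Scope ring_scope.

Section RatA.
Variable A : idomainType.
Hypothesis hQ : forall n : nat, ((n.+1)%:R : A)%R \is a GRing.unit.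

Lemma den_unit (x : rat) : ((denq x)%:~R : A) \is a GRing.unit.
Proof. have := denq_gt0 x; case: (denq x) => // -[|m] _ //=; exact: hQ. Qed.

Lemma ratrM (x y : rat) : ratr (x * y) = ratr x * ratr y :> A.
Proof.
have injZtoQ: @injective rat int intr by apply: intr_inj.
rewrite /ratr mulrC mulrAC; apply: canLR (mulKr (den_unit _)) _; rewrite !mulrA.
do 2!apply: canRL (mulrK (den_unit _)) _; rewrite -!rmorphM; congr _%:~R.
apply: injZtoQ; rewrite !rmorphM [x * y]lock /= !numqE -lock.
by rewrite -!mulrA mulrA mulrCA -!mulrA (mulrCA y).
Qed.

Lemma ratr1 : ratr 1 = 1 :> A.
Proof. by rewrite /ratr divr1. Qed.

Lemma nat_neq0 (n : nat) : ((n.+1)%:R : A) != 0.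
Proof. by apply: contraTneq (hQ n) => ->; rewrite unitr0. Qed.

Lemma intr_neq0 (z : int) : z != 0 -> (z%:~R : A) != 0.
Proof.
case: z => [[|n]|n] //= _; first exact: nat_neq0.
rewrite NegzE rmorphN oppr_eq0 /=; exact: nat_neq0.
Qed.

Lemma ratr_neq0 (x : rat) : x != 0 -> ratr x != 0 :> A.
Proof.
move=> hx; rewrite /ratr mulf_eq0 negb_or intr_neq0 ?numq_eq0 //=.
rewrite invr_eq0; exact: intr_neq0 (denq_neq0 x).
Qed.

Lemma ratrN (x : rat) : ratr (- x) = - ratr x :> A.
Proof. by rewrite /ratr numqN denqN rmorphN mulNr. Qed.

Lemma ratrV (x : rat) : x != 0 -> ratr x * ratr x^-1 = 1 :> A.
Proof. by move=> hx; rewrite -ratrM divff // ratr1. Qed.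
End RatA.

Section SpecA.
Variable A : idomainType.
Hypothesis hQ : forall n : nat, ((n.+1)%:R : A)%R \is a GRing.unit.

Local Notation HA := (ring_hs A).
Local Notation R := (quot (QA A)).
Local Notation pi := (qproj (QA A)).

Lemma QA1 : QA A (GRing.one A).
Proof. by exists 1; rewrite ratr1. Qed.
Lemma QAM (g h : HA) : QA A g -> QA A h -> QA A (hmul g h).
Proof.
move=> [q [hq ->]] [r [hr ->]]; exists (q * r); split; first by rewrite mulf_neq0.
by rewrite /= ratrM.
Qed.
Lemma QAV (g : HA) : QA A g -> exists g', QA A g' /\ @hmul HA g g' = GRing.one A.
Proof.
move=> [q [hq ->]]; exists (ratr q^-1); split; last exact: ratrV.
by exists q^-1; rewrite invr_eq0.
Qed.
Lemma QA_neq0 (g : A) : QA A g -> g != 0.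
Proof. by move=> [q [hq ->]]; exact: ratr_neq0. Qed.

Lemma mulHA (x y w : HA) : hmul x (hmul y w) = hmul (hmul x y) w.
Proof. exact: mulrA. Qed.
Lemma mulHC (x y : HA) : hmul x y = hmul y x.
Proof. exact: mulrC. Qed.
Lemma mulH1 (x : HA) : @hmul HA (GRing.one A) x = x.
Proof. exact: mul1r. Qed.

Lemma piM (x y : A) : hmul (pi x) (pi y) = pi (x * y).
Proof. exact: qmul_proj mulHA mulHC mulH1 QA1 QAM QAV _ _. Qed.

Lemma pi_eq (x y : A) : pi x = pi y <-> exists g, QA A g /\ y = x * g.
Proof. rewrite qproj_eq; exact: hcoset_eqP mulHA mulHC mulH1 QA1 QAM QAV _ _. Qed.

Lemma pi_surj (X : R) : exists b, X = pi b.
Proof. exact: qproj_surj. Qed.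

Lemma piadd (x y : A) (Z : R) : hadd (pi x) (pi y) Z <->
  exists t s, QA A t /\ QA A s /\ Z = pi (x * t + y * s).
Proof.
rewrite (qadd_proj mulHA mulHC mulH1 QA1 QAM QAV); split.
  by move=> [t [s [q [Gt [Gs [/= -> ->]]]]]]; exists t, s.
by move=> [t [s [Gt [Gs ->]]]]; exists t, s, (x * t + y * s).
Qed.

Lemma pineg (x : A) : hneg (pi x) = pi (- x).
Proof.
have Hex : exists Z : R, exists x', proj1_sig (pi x) = hcoset (QA A) x' /\
    proj1_sig Z = hcoset (QA A) (hneg x').
  by exists (pi (- x)), x.
have := @pick_orP _ (pi x) _ Hex.
move=> [x' [/= /(hcoset_eqP mulHA mulHC mulH1 QA1 QAM QAV) [g [Gg ->]] E]].
apply: sig_eq; rewrite [LHS]E /=; symmetry.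
apply/(hcoset_eqP mulHA mulHC mulH1 QA1 QAM QAV); exists g; split => //.
by rewrite /= mulNr.
Qed.

Section Ideal.
Variable J : set HA.
Hypothesis hJ : hyperideal J.
Lemma Jsub (a b r : A) : J a -> J b -> J (a - r * b).
Proof. by move=> Ja Jb; apply: (proj2 hJ a b r Ja Jb). Qed.
Lemma J0 : J 0.
Proof. by have [a Ja] := proj1 hJ; have := Jsub 1 Ja Ja; rewrite mul1r subrr. Qed.
Lemma JM (r b : A) : J b -> J (r * b).
Proof. by move=> Jb; have := Jsub (- r) J0 Jb; rewrite mulNr opprK add0r. Qed.
Lemma JMr (r b : A) : J b -> J (b * r).
Proof. by rewrite mulrC; exact: JM. Qed.
Lemma JD (a b : A) : J a -> J b -> J (a + b).
Proof. by move=> Ja Jb; have := Jsub (-1) Ja Jb; rewrite mulNr mul1r opprK. Qed.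
Lemma J1 : J 1 -> J = setT.
Proof. by move=> J1; apply/seteqP; split => // x _; rewrite -(mulr1 x); exact: JM. Qed.
End Ideal.

Definition pre (I : set R) : set HA := [set a | I (pi a)].
Definition img (J : set HA) : set R := [set X | exists a, J a /\ X = pi a].

Lemma hyper_pre I : hyperideal I -> hyperideal (pre I).
Proof.
move=> [[X IX] hI]; split.
  by have [a Ea] := pi_surj X; exists a; rewrite /pre /= -Ea.
move=> a b r Ia Ib y /= ->; rewrite /pre /=.
apply: (hI (pi a) (pi b) (pi r) Ia Ib); rewrite piM pineg.
by apply/piadd; exists 1, 1; split; [exact: QA1|split; [exact: QA1|rewrite !mulr1]].
Qed.

Lemma hyper_img J : hyperideal J -> hyperideal (img J).
Proof.
move=> hJ; split.
  by exists (pi 0); exists 0; split => //; exact: J0.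
move=> X Y r [a [Ja ->]] [b [Jb ->]]; have [c ->] := pi_surj r.
rewrite piM pineg => Z /piadd [t [s [_ [_ ->]]]].
exists (a * t + - (c * b) * s); split => //.
rewrite -mulNr; apply: (JD hJ); first exact: (JMr hJ).
exact: (JMr hJ) (JM hJ _ Jb).
Qed.

Lemma pre_img J : hyperideal J -> pre (img J) = J.
Proof.
move=> hJ; apply/seteqP; split => a /=.
  move=> [b [Jb /esym /pi_eq [g [[q [hq ->]] ->]]]].
  exact: (JMr hJ).
by move=> Ja; exists a.
Qed.

Lemma img_pre I : img (pre I) = I.
Proof.
apply/seteqP; split => X /=; first by move=> [a [Ia ->]].
by move=> IX; have [a Ea] := pi_surj X; exists a; rewrite /pre /= -Ea.
Qed.

Lemma prime_pre I : prime_hideal I -> prime_hideal (pre I).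
Proof.
move=> [hI [nT pI]]; split; first exact: hyper_pre.
split.
  move=> E; apply: nT; rewrite -(img_pre I) E; apply/seteqP; split => // X _.
  by have [a ->] := pi_surj X; exists a.
move=> x y; rewrite /pre /= => h; apply: pI; rewrite piM; exact: h.
Qed.

Lemma prime_img J : prime_hideal J -> prime_hideal (img J).
Proof.
move=> [hJ [nT pJ]]; split; first exact: hyper_img.
split.
  move=> E; apply: nT; apply: J1 => //; rewrite -(pre_img hJ) /pre /= E //.
move=> X Y; have [x ->] := pi_surj X; have [y ->] := pi_surj Y.
rewrite piM => hxy.
have : pre (img J) (x * y) by [].
rewrite pre_img // => /pJ [] h; [left; exists x | right; exists y]; by [].
Qed.

Definition phiA (p : Spec R) : Spec HA := exist _ _ (prime_pre (proj2_sig p)).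
Definition psiA (p : Spec HA) : Spec R := exist _ _ (prime_img (proj2_sig p)).

Lemma phi_psi p : phiA (psiA p) = p.
Proof. by apply: sig_eq; rewrite /= pre_img //; exact: (proj1 (proj2_sig p)). Qed.
Lemma psi_phi p : psiA (phiA p) = p.
Proof. by apply: sig_eq; rewrite /= img_pre. Qed.

Lemma phi_bij : bijective phiA.
Proof. by exists psiA; [exact: psi_phi | exact: phi_psi]. Qed.

Lemma phi_open (W : set (Spec HA)) : zopen W <-> zopen (phiA @^-1` W).
Proof.
split.
  move=> [I [hI EI]]; exists (img I); split; first exact: hyper_img.
  apply/seteqP; split => q /=.
    move=> nW; have : (~` W) (phiA q) by [].
    rewrite EI /= => sI X [a [Ia ->]]; exact: sI.
  move=> sI; have : (~` W) (phiA q); last by [].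
  rewrite EI /= => a Ia; apply: sI; by exists a.
move=> [I [hI EI]]; exists (pre I); split; first exact: hyper_pre.
apply/seteqP; split => p /=.
  move=> nW; have : (~` (phiA @^-1` W)) (psiA p) by rewrite /= phi_psi.
  rewrite EI /= => sI a Ia.
  have [b [pb Eb]] := sI _ Ia.
  have : pre (img (proj1_sig p)) a by rewrite /pre /= Eb; exists b.
  by rewrite pre_img //; exact: (proj1 (proj2_sig p)).
move=> sI; rewrite -(phi_psi p).
have : (~` (phiA @^-1` W)) (psiA p); last by [].
rewrite EI /= => X IX; have [a Ea] := pi_surj X.
exists a; split; last by [].
by apply: sI; rewrite /pre /= -Ea.
Qed.
End SpecA.

Section Inst.
Variable A : idomainType.
Hypothesis hQ : forall n : nat, ((n.+1)%:R : A)%R \is a GRing.unit.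

Local Notation HA := (ring_hs A).
Local Notation R := (quot (QA A)).
Local Notation pi := (qproj (QA A)).

Lemma mulH0 (x : HA) : @hmul HA ((0 : A)) x = (0 : A).
Proof. exact: mul0r. Qed.
Lemma mulHI (x y w : HA) : x <> (0 : A) -> hmul x y = hmul x w -> y = w.
Proof. by move=> /eqP hx; apply: mulfI. Qed.
Lemma primeA_e (p : Spec HA) : ~ proj1_sig p (GRing.one A).
Proof.
case: p => P [hP [nT _]] /= h; apply: nT; exact: J1.
Qed.
Lemma primeA_z (p : Spec HA) : proj1_sig p ((0 : A)).
Proof. case: p => P [hP _] /=; exact: J0. Qed.

Lemma prime0 : @prime_hideal HA [set (0 : A)].
Proof.
split; first split.
- by exists 0.
- by move=> a b r /= -> -> y ->; rewrite mulr0 subrr.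
split.
  move=> E; have : [set (0 : A)] (GRing.one A) by rewrite E.
  by move/eqP; rewrite oner_eq0.
by move=> x y /= /eqP; rewrite mulf_eq0 => /orP [] /eqP; [left|right].
Qed.

Definition etaA : Spec HA := exist _ _ prime0.

Lemma DopenA (g : HA) : zopen [set q : Spec HA | ~ proj1_sig q g].
Proof.
exists [set x : HA | exists c : A, x = c * g]; split.
  split; first by exists g, 1; rewrite mul1r.
  move=> a b r [c ->] [d ->] y /= ->; exists (c - r * d).
  by rewrite mulrBl mulrA.
apply/seteqP; split => q /=.
  move=> /contrapT qg x [c ->]; apply: (JM (proj1 (proj2_sig q))); exact: qg.
by move=> h ng; apply: ng; apply: h; exists 1; rewrite mul1r.
Qed.

Lemma mulRA (x y w : R) : hmul x (hmul y w) = hmul (hmul x y) w.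
Proof.
have [a ->] := pi_surj x; have [b ->] := pi_surj y; have [c ->] := pi_surj w.
by rewrite !(piM hQ) mulrA.
Qed.
Lemma mulRC (x y : R) : hmul x y = hmul y x.
Proof. by have [a ->] := pi_surj x; have [b ->] := pi_surj y; rewrite !(piM hQ) mulrC. Qed.
Lemma mulR1 (x : R) : hmul (pi (1 : A)) x = x.
Proof. by have [a ->] := pi_surj x; rewrite (piM hQ) mul1r. Qed.
Lemma mulR0 (x : R) : hmul (pi (0 : A)) x = pi (0 : A).
Proof. by have [a ->] := pi_surj x; rewrite (piM hQ) mul0r. Qed.
Lemma pi_neq0 (x : A) : pi x <> pi (0 : A) -> x != 0.
Proof. by apply: contra_notN => /eqP ->. Qed.
Lemma mulRI (x y w : R) : x <> pi (0 : A) -> hmul x y = hmul x w -> y = w.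
Proof.
have [a ->] := pi_surj x; have [b ->] := pi_surj y; have [c ->] := pi_surj w.
move=> /pi_neq0 ha; rewrite !(piM hQ) => /(pi_eq hQ) [g [Gg E]].
apply/(pi_eq hQ); exists g; split => //; apply: (mulfI ha); by rewrite E mulrA.
Qed.

Lemma pre_phi (p : Spec R) a : proj1_sig (phiA hQ p) a <-> proj1_sig p (pi a).
Proof. by []. Qed.

Lemma primeR_e (p : Spec R) : ~ proj1_sig p (pi (1 : A)).
Proof. move=> h; exact: (primeA_e (p := phiA hQ p) h). Qed.
Lemma primeR_z (p : Spec R) : proj1_sig p (pi (0 : A)).
Proof. exact: (primeA_z (phiA hQ p)). Qed.

Definition etaR : Spec R := psiA hQ etaA.
Lemma etaRE : proj1_sig etaR = [set pi (0 : A)].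
Proof.
apply/seteqP; split => X /=; first by move=> [a [-> ->]].
by move=> ->; exists 0.
Qed.

Lemma DopenR (G : R) : zopen [set q : Spec R | ~ proj1_sig q G].
Proof.
have [g ->] := pi_surj G.
have -> : [set q : Spec R | ~ proj1_sig q (pi g)] = phiA hQ @^-1` [set q | ~ proj1_sig q g].
  by apply/seteqP; split.
by apply/phi_open; exact: DopenA.
Qed.
End Inst.

Section Inst2.
Variable A : idomainType.
Hypothesis hQ : forall n : nat, ((n.+1)%:R : A)%R \is a GRing.unit.
Local Notation HA := (ring_hs A).
Local Notation R := (quot (QA A)).
Local Notation pi := (qproj (QA A)).

Definition GA : GenHyp HA :=
  @GenHypB HA (1 : A) (0 : A) (@mulHA A) (@mulHC A) (@mulH1 A) (@mulH0 A) (@mulHI A)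
    (@primeA_e A) (@primeA_z A) (etaA A) erefl (@DopenA A).

Definition GR : GenHyp R :=
  @GenHypB R (pi (1 : A)) (pi (0 : A)) (@mulRA A hQ) (@mulRC A hQ) (@mulR1 A hQ)
    (@mulR0 A hQ) (@mulRI A hQ) (@primeR_e A hQ) (@primeR_z A hQ) (etaR hQ) (etaRE hQ)
    (@DopenR A hQ).
End Inst2.

Section Main.
Variable A : idomainType.
Hypothesis hQ : forall n : nat, ((n.+1)%:R : A)%R \is a GRing.unit.
Local Notation HA := (ring_hs A).
Local Notation R := (quot (QA A)).
Local Notation pi := (qproj (QA A)).
Local Notation GA := (GA A).
Local Notation GR := (GR hQ).

Lemma pi_eq0 (f : A) : pi f = pi 0 -> f = 0.
Proof.
move/(pi_eq hQ) => [g [Gg /esym /eqP]]; rewrite mulf_eq0 => /orP [/eqP //|].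
by move/eqP => E; move: (QA_neq0 hQ Gg); rewrite E eqxx.
Qed.

Lemma pi_scale (x g : A) : QA A g -> pi (x * g) = pi x.
Proof. by move=> Gg; symmetry; apply/(pi_eq hQ); exists g. Qed.

Lemma not_etaA (f : A) : f != 0 -> ~ proj1_sig (etaA A) f.
Proof. by move=> /eqP hf /= E. Qed.

Lemma not_etaR (f : A) : f != 0 -> ~ proj1_sig (etaR hQ) (pi f).
Proof. by move=> /eqP hf; rewrite etaRE => /pi_eq0. Qed.

Lemma etaR_nz (F : R) : ~ proj1_sig (etaR hQ) F -> exists f : A, f != 0 /\ F = pi f.
Proof.
have [f ->] := pi_surj F; rewrite etaRE => h; exists f; split => //.
by apply/eqP => E; apply: h; rewrite E.
Qed.

Lemma etaA_nz (f : A) : ~ proj1_sig (etaA A) f -> f != 0.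
Proof. by move=> h; apply/eqP. Qed.

Lemma ladd_eval (x : Spec HA) (c d e : loc x) (a f b g : A) :
  isrep x (proj1_sig c) a f -> isrep x (proj1_sig d) b g -> ladd c d e ->
  proj1_sig e = cls x (a * g + f * b) (f * g).
Proof.
move=> [hf Ec] [hg Ed] [r1 [t1 [r2 [t2 [y [[h1 E1] [[h2 E2] [/= -> ->]]]]]]]].
rewrite Ec in E1; rewrite Ed in E2.
have [u1 [hu1 Eu1]] := cls_inv GA h1 E1.
have [u2 [hu2 Eu2]] := cls_inv GA h2 E2.
move: Eu1 Eu2 => /= Eu1 Eu2.
apply: (cls_eq GA (u := u1 * u2)); [exact: notp_mul|exact: notp_mul|exact: notp_mul|].
rewrite /=.
have -> : u1 * u2 * ((r1 * t2 + t1 * r2) * (f * g)) =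
   (u1 * (r1 * f)) * (u2 * t2 * g) + (u2 * (r2 * g)) * (u1 * t1 * f) by ring.
rewrite -Eu1 -Eu2; ring.
Qed.

Variable U : set (Spec HA).
Hypothesis hUeta : U (geta GA).
Local Notation etU := (etaV hUeta).
Local Notation OU := (OS U).

Definition isrepU (s : sect U) a f := isrep (etaA A) (proj1_sig (proj1_sig s etU)) a f.

Lemma sect_rep (s : sect U) : exists a f, f != 0 /\ isrepU s a f.
Proof.
have [a [f [hf E]]] := loc_rep (proj1_sig s etU).
by exists a, f; split; [exact: etaA_nz | split].
Qed.

Lemma smul_rep (s t : sect U) a f b g : isrepU s a f -> isrepU t b g ->
  isrepU (smul s t) (a * b) (f * g).
Proof.
move=> h1 h2; split; first exact: notp_mul (proj1 h1) (proj1 h2).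
exact: (smul_eta (GH := GA) (Veta := hUeta) h1 h2).
Qed.

Lemma repU_eq (s1 s2 : sect U) a f : isrepU s1 a f -> isrepU s2 a f -> s1 = s2.
Proof. by move=> [_ E1] [_ E2]; apply: (sect_ext (GH := GA) (Veta := hUeta)); rewrite E1 E2. Qed.

Lemma repU_cls (s : sect U) a f a' f' : isrepU s a f -> f' != 0 -> a * f' = a' * f ->
  isrepU s a' f'.
Proof.
move=> [hf E] hf' Ea; split; first exact: not_etaA.
rewrite E; exact: (cls_eq1 GA) hf (not_etaA hf') Ea.
Qed.

Lemma cst_loc (q : rat) (x : pt U) : exists r t, isrep (proj1_sig x) (cls (proj1_sig x) (ratr q : HA) (1 : A)) r t.
Proof. by exists (ratr q), 1; split => //; exact: primeA_e. Qed.

Lemma cst_locfrac (q : rat) :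
  islocfrac (fun x : pt U => exist _ _ (cst_loc q x) : loc (proj1_sig x)).
Proof.
apply: (locfrac_mk (GH := GA) (a0 := (ratr q : HA)) (f0 := (1 : A))) => /=.
  exact/eqP/oner_neq0.
by move=> x; exists (ratr q), 1; split; [exact: primeA_e | split].
Qed.

Definition cst (q : rat) : OU := exist _ _ (cst_locfrac q).

Lemma cst_QX (q : rat) : q != 0 -> QX U (cst q).
Proof. by move=> hq; exists q. Qed.

Lemma cst_rep (q : rat) : isrepU (cst q) (ratr q) 1.
Proof. by split; [exact: (not_etaA (oner_neq0 _)) | by []]. Qed.

Lemma QX_rep (c : OU) : QX U c -> exists q, q != 0 /\ isrepU c (ratr q) 1.
Proof. by move=> [q [hq E]]; exists q; split => //; split; [exact: primeA_e | exact: E]. Qed.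

Lemma QX_cst (c : OU) : QX U c -> exists q, q != 0 /\ c = cst q.
Proof.
move=> /QX_rep [q [hq h]]; exists q; split => //.
exact: repU_eq h (cst_rep q).
Qed.

Lemma mulOA (s t w : OU) : hmul s (hmul t w) = hmul (hmul s t) w.
Proof.
have [a [f [_ ha]]] := sect_rep s; have [b [g [_ hb]]] := sect_rep t.
have [c [h [_ hc]]] := sect_rep w.
apply: repU_eq (smul_rep ha (smul_rep hb hc)) _.
by rewrite mulrA [f * (g * h)]mulrA; exact: smul_rep (smul_rep ha hb) hc.
Qed.

Lemma mulOC (s t : OU) : hmul s t = hmul t s.
Proof.
have [a [f [_ ha]]] := sect_rep s; have [b [g [_ hb]]] := sect_rep t.
apply: repU_eq (smul_rep ha hb) _.
by rewrite mulrC [f * g]mulrC; exact: smul_rep hb ha.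
Qed.

Lemma mulO1 (s : OU) : hmul (cst 1) s = s.
Proof.
have [a [f [_ ha]]] := sect_rep s.
apply: repU_eq (smul_rep (cst_rep 1) ha) _.
by rewrite ratr1 !mul1r.
Qed.

Lemma QX1 : QX U (cst 1).
Proof. exact/cst_QX/oner_neq0. Qed.

Lemma QXM (c d : OU) : QX U c -> QX U d -> QX U (hmul c d).
Proof.
move=> /QX_rep [q [hq hc]] /QX_rep [r [hr hd]].
exists (q * r); split; first by rewrite mulf_neq0.
move=> x; rewrite /= (smul_eval (GH := GA) hUeta).
rewrite (lmul_eval GA (r1 := ratr q) (t1 := 1) (r2 := ratr r) (t2 := 1)).
- by rewrite /= ratrM // mulr1.
- split; [exact: primeA_e | have [_ E] := hc; move: E => /=].
  have <- : cst q = c by exact: repU_eq (cst_rep q) hc.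
  by [].
- split; [exact: primeA_e | have [_ E] := hd].
  have <- : cst r = d by exact: repU_eq (cst_rep r) hd.
  by [].
Qed.

Lemma QXV (c : OU) : QX U c -> exists c', QX U c' /\ hmul c c' = cst 1.
Proof.
move=> /QX_cst [q [hq ->]]; exists (cst q^-1); split; first by apply: cst_QX; rewrite invr_eq0.
apply: repU_eq (smul_rep (cst_rep q) (cst_rep q^-1)) _.
by rewrite ratrV // mulr1; have := cst_rep 1; rewrite ratr1.
Qed.

Lemma qproj_eqU (s s' : OU) : qproj (QX U) s = qproj (QX U) s' <->
  exists c, QX U c /\ s' = hmul s c.
Proof. rewrite qproj_eq; exact: hcoset_eqP mulOA mulOC mulO1 QX1 QXM QXV _ _. Qed.

Lemma qmulU (s t : OU) :
  @hmul (quot (QX U)) (qproj (QX U) s) (qproj (QX U) t) = qproj (QX U) (hmul s t).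
Proof. exact: qmul_proj mulOA mulOC mulO1 QX1 QXM QXV _ _. Qed.

Lemma qaddU (s t : OU) Z : @hadd (quot (QX U)) (qproj (QX U) s) (qproj (QX U) t) Z <->
  exists c d r, QX U c /\ QX U d /\ hadd (hmul s c) (hmul t d) r /\ Z = qproj (QX U) r.
Proof. exact: qadd_proj mulOA mulOC mulO1 QX1 QXM QXV _ _ _. Qed.

Local Notation V := (phiA hQ @^-1` U).

Lemma hVeta : V (geta GR).
Proof. by rewrite /= /etaR (phi_psi hQ). Qed.

Local Notation etV := (etaV hVeta).

Definition isrepV (s : sect V) a f := isrep (etaR hQ) (proj1_sig (proj1_sig s etV)) a f.

Definition M (s : sect U) (S : sect V) :=
  exists a f, f != 0 /\ isrepU s a f /\ isrepV S (pi a) (pi f).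

Lemma pi_nz (f : A) : f != 0 -> pi f <> pi 0.
Proof. by move=> /eqP hf /pi_eq0. Qed.

Lemma Mrep (s : sect U) (S : sect V) a f : M s S -> f != 0 -> isrepU s a f ->
  isrepV S (pi a) (pi f).
Proof.
move=> [a0 [f0 [hf0 [h0 [_ E0]]]]] hf [_ E]; split; first exact: not_etaR.
rewrite E0; apply: (cls_eq1 GR); [exact: not_etaR|exact: not_etaR|].
rewrite !(piM hQ); congr pi.
have := proj2 h0; rewrite E => /(cls_eta_inv (GH := GA)) /= -> //.
exact/eqP.
Qed.

Lemma Gmap_ex (s : sect U) : exists S : sect V, M s S.
Proof.
have [a [f [hf ha]]] := sect_rep s.
have hfz : f <> gz GA by exact/eqP.
have exc : forall q : pt V, exists c : loc (proj1_sig q), exists a' f',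
    ~ proj1_sig (proj1_sig q) (pi f') /\
    proj1_sig c = cls (proj1_sig q) (pi a') (pi f') /\ a' * f = a * f'.
  move=> q; pose x : pt U := exist _ (phiA hQ (proj1_sig q)) (proj2_sig q).
  have [a' [f' [hf' [_ Ea]]]] := ge3 (GH := GA) (Veta := hUeta) x hfz (proj2 ha).
  by exists (exist _ (cls (proj1_sig q) (pi a') (pi f'))
     (ex_intro _ _ (ex_intro _ _ (conj hf' erefl)))), a', f'.
pose Sf q := proj1_sig (cid (exc q)).
have hl : islocfrac Sf.
  apply: (locfrac_mk (GH := GR) (a0 := pi a) (f0 := pi f)); first exact: pi_nz.
  move=> q; have [a' [f' [h1 [h2 h3]]]] := proj2_sig (cid (exc q)).
  by exists (pi a'), (pi f'); split => //; split => //; rewrite !(piM hQ) h3.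
exists (exist _ Sf hl), a, f; split => //; split => //; split; first exact: not_etaR.
have [a' [f' [h1 [h2 h3]]]] := proj2_sig (cid (exc etV)).
rewrite /= /Sf h2; apply: (cls_eq1 GR) => //; first exact: not_etaR.
by rewrite !(piM hQ) h3.
Qed.

Lemma lift_ex (S : sect V) : exists s : sect U, M s S.
Proof.
have [R1 [T1 [hT1 ES]]] := loc_rep (proj1_sig S etV).
have [f [hf ET]] := etaR_nz hT1; have [a Ea] := pi_surj R1; subst T1 R1.
have hfz : pi f <> gz GR by exact: pi_nz.
have exc : forall x : pt U, exists c : loc (proj1_sig x), exists b g,
    ~ proj1_sig (proj1_sig x) g /\ proj1_sig c = cls (proj1_sig x) b g /\ b * f = a * g.
  move=> x.
  have hy : V (psiA hQ (proj1_sig x)) by rewrite /= (phi_psi hQ); exact: proj2_sig x.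
  pose y : pt V := exist _ _ hy.
  have [A' [F' [hF' [_ EA]]]] := ge3 (GH := GR) (Veta := hVeta) y hfz ES.
  have [a' Ea'] := pi_surj A'; have [f' Ef'] := pi_surj F'.
  rewrite Ea' Ef' !(piM hQ) in EA; rewrite Ef' in hF'.
  have [g [Gg Eg]] := (pi_eq hQ _ _).1 EA.
  have hf' : ~ proj1_sig (proj1_sig x) f'.
    by move=> xf; apply: hF'; exists f'.
  exists (exist _ (cls (proj1_sig x) (a' * g) f')
     (ex_intro _ _ (ex_intro _ _ (conj hf' erefl)))), (a' * g), f'.
  split => //; split => //=.
  by rewrite Eg mulrAC.
pose sf x := proj1_sig (cid (exc x)).
have hl : islocfrac sf.
  apply: (locfrac_mk (GH := GA) (a0 := a) (f0 := f)); first exact/eqP.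
  by move=> x; have [b [g [h1 [h2 h3]]]] := proj2_sig (cid (exc x)); exists b, g.
exists (exist _ sf hl), a, f; split => //; split; last by split.
split; first exact: not_etaA.
have [b [g [h1 [h2 h3]]]] := proj2_sig (cid (exc etU)).
rewrite /= /sf h2; apply: (cls_eq1 GA) => //; exact: not_etaA.
Qed.

Lemma K1 (s s' : sect U) (S : sect V) : M s S -> M s' S ->
  qproj (QX U) s = qproj (QX U) s'.
Proof.
move=> [a [f [hf [ha hA]]]] [a' [f' [hf' [ha' hA']]]].
have E : cls (etaR hQ) (pi a) (pi f) = cls (etaR hQ) (pi a') (pi f').
  by rewrite -(proj2 hA) -(proj2 hA').
have := cls_eta_inv (GH := GR) (pi_nz hf') E; rewrite !(piM hQ).
move=> /(pi_eq hQ) [_ [[q [hq ->]] Eg]].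
apply/qproj_eqU; exists (cst q); split; first exact: cst_QX.
apply: repU_eq ha' _.
apply: repU_cls (smul_rep ha (cst_rep q)) hf' _.
by rewrite mulr1 Eg; ring.
Qed.

Lemma K2 (s c : sect U) (S : sect V) : M s S -> QX U c -> M (@hmul OU s c) S.
Proof.
move=> [a [f [hf [ha hA]]]] /QX_rep [q [hq hc]].
exists (a * ratr q), (f * 1); split; first by rewrite mulr1.
split; first exact: smul_rep ha hc.
rewrite mulr1 pi_scale //; by exists q.
Qed.

Lemma K3 (s : sect U) (S S' : sect V) : M s S -> M s S' -> S = S'.
Proof.
move=> hM hM'; have [a [f [hf [ha hA]]]] := hM.
have hA' := Mrep hM' hf ha.
by apply: (sect_ext (GH := GR) (Veta := hVeta)); rewrite (proj2 hA) (proj2 hA').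
Qed.

Lemma K4 (s t : sect U) (S T : sect V) : M s S -> M t T -> M (@hmul OU s t) (@hmul (OS V) S T).
Proof.
move=> [a [f [hf [ha hA]]]] [b [g [hg [hb hB]]]].
exists (a * b), (f * g); split; first by rewrite mulf_neq0.
split; first exact: smul_rep.
split; first by apply: not_etaR; rewrite mulf_neq0.
rewrite -!(piM hQ); exact: (smul_eta (GH := GR) (Veta := hVeta)) hA hB.
Qed.

Lemma sumU_ex (s t : sect U) : exists r : sect U, @hadd OU s t r.
Proof.
have [a [f [hf ha]]] := sect_rep s; have [b [g [hg hb]]] := sect_rep t.
have hfz : f <> gz GA by exact/eqP.
have hgz : g <> gz GA by exact/eqP.
have exc : forall x : pt U, exists c : loc (proj1_sig x),
    ladd (proj1_sig s x) (proj1_sig t x) c /\ exists b' g',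
    ~ proj1_sig (proj1_sig x) g' /\ proj1_sig c = cls (proj1_sig x) b' g' /\
    b' * (f * g) = (a * g + f * b) * g'.
  move=> x.
  have [a' [f' [hf' [Es Ea]]]] := ge3 (GH := GA) (Veta := hUeta) x hfz (proj2 ha).
  have [b' [g' [hg' [Et Eb]]]] := ge3 (GH := GA) (Veta := hUeta) x hgz (proj2 hb).
  have hfg : ~ proj1_sig (proj1_sig x) (f' * g') by exact: notp_mul.
  exists (exist _ (cls (proj1_sig x) (a' * g' + f' * b') (f' * g'))
     (ex_intro _ _ (ex_intro _ _ (conj hfg erefl)))); split.
    by exists a', f', b', g', (a' * g' + f' * b').
  exists (a' * g' + f' * b'), (f' * g'); split => //; split => //.
  move: Ea Eb => /= Ea Eb.
  have -> : (a' * g' + f' * b') * (f * g) = (a' * f) * (g' * g) + (b' * g) * (f' * f) by ring.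
  by rewrite Ea Eb; ring.
pose rf x := proj1_sig (cid (exc x)).
have hl : islocfrac rf.
  apply: (locfrac_mk (GH := GA) (a0 := a * g + f * b) (f0 := f * g)).
    by apply/eqP; rewrite mulf_neq0.
  move=> x; have [_ [b' [g' [h1 [h2 h3]]]]] := proj2_sig (cid (exc x)).
  by exists b', g'.
exists (exist _ rf hl) => x.
exact: (proj1 (proj2_sig (cid (exc x)))).
Qed.

Lemma lift_pi (q : Spec R) (X : R) : ~ proj1_sig q X ->
  exists x : A, ~ proj1_sig q (pi x) /\ X = pi x.
Proof. by have [x ->] := pi_surj X; exists x. Qed.

Lemma K7 (s t r : sect U) (S T Rh : sect V) : M s S -> M t T -> M r Rh ->
  @hadd OU s t r -> @hadd (OS V) S T Rh.
Proof.
move=> [a [f [hf [ha hA]]]] [b [g [hg [hb hB]]]] hMr hsum q.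
have hr : isrepU r (a * g + f * b) (f * g).
  split; first by apply: not_etaA; rewrite mulf_neq0.
  exact: ladd_eval ha hb (hsum etU).
have hR := Mrep hMr (mulf_neq0 hf hg) hr.
have [A1 [F1 [hF1 [ES EA]]]] := ge3 (GH := GR) (Veta := hVeta) q (pi_nz hf) (proj2 hA).
have [B1 [G1 [hG1 [ET EB]]]] := ge3 (GH := GR) (Veta := hVeta) q (pi_nz hg) (proj2 hB).
have [f1 [hf1 EF]] := lift_pi hF1; have [g1 [hg1 EG]] := lift_pi hG1.
have [a1 EA1] := pi_surj A1; have [b1 EB1] := pi_surj B1.
subst A1 F1 B1 G1.
move: EA EB; rewrite !(piM hQ) => /(pi_eq hQ) [w [Gw Ew]] /(pi_eq hQ) [w2 [Gw2 Ew2]].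
exists (pi a1), (pi f1), (pi b1), (pi g1), (pi (a1 * g1 * w + f1 * b1 * w2)).
split; first by split.
split; first by split.
split.
  rewrite !(piM hQ); apply/(piadd hQ); by exists w, w2.
rewrite (piM hQ); apply: (ge2 (GH := GR) (Veta := hVeta)).
  by rewrite -(piM hQ); exact: notp_mul.
rewrite (proj2 hR); apply: (cls_eq1 GR).
- by apply: not_etaR; rewrite mulf_neq0.
- apply: not_etaR; apply/eqP => E; apply: hf1; rewrite (_ : f1 = 0); first exact: primeR_z.
  by move: E => /eqP; rewrite mulf_eq0 => /orP [] /eqP // E0; exfalso; apply: hg1; rewrite E0; exact: primeR_z.
- rewrite !(piM hQ); congr pi.
  have -> : (a * g + f * b) * (f1 * g1) = (a * f1) * (g * g1) + (b * g1) * (f * f1) by ring.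
  rewrite Ew Ew2; ring.
Qed.

Lemma K5 (s t : sect U) (S T Rh : sect V) : M s S -> M t T -> @hadd (OS V) S T Rh ->
  exists c d r, QX U c /\ QX U d /\ @hadd OU (@hmul OU s c) (@hmul OU t d) r /\ M r Rh.
Proof.
move=> [a [f [hf [ha hA]]]] [b [g [hg [hb hB]]]] hsum.
have [R1 [T1 [R2 [T2 [Y [[hT1 ES] [[hT2 ET] [HY ER]]]]]]]] := hsum etV.
have [f1 [hf1 EF]] := etaR_nz hT1; have [g1 [hg1 EG]] := etaR_nz hT2.
have [a1 EA1] := pi_surj R1; have [b1 EB1] := pi_surj R2.
subst R1 T1 R2 T2.
move: HY; rewrite !(piM hQ) => /(piadd hQ) [u [v [[qu [hqu Eu]] [[qv [hqv Ev]] EY]]]].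
subst Y u v.
have E1 : cls (etaR hQ) (pi a) (pi f) = cls (etaR hQ) (pi a1) (pi f1) by rewrite -(proj2 hA) ES.
have E2 : cls (etaR hQ) (pi b) (pi g) = cls (etaR hQ) (pi b1) (pi g1) by rewrite -(proj2 hB) ET.
move: (cls_eta_inv (GH := GR) (pi_nz hf1) E1); rewrite !(piM hQ).
move=> /(pi_eq hQ) [_ [[qw [hqw ->]] Ew]].
move: (cls_eta_inv (GH := GR) (pi_nz hg1) E2); rewrite !(piM hQ).
move=> /(pi_eq hQ) [_ [[qw2 [hqw2 ->]] Ew2]].
have hc := cst_QX (mulf_neq0 hqw hqu).
have hd := cst_QX (mulf_neq0 hqw2 hqv).
have [r hr] := sumU_ex (@hmul OU s (cst (qw * qu))) (@hmul OU t (cst (qw2 * qv))).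
exists (cst (qw * qu)), (cst (qw2 * qv)), r; split => //; split => //; split => //.
have hsc := smul_rep ha (cst_rep (qw * qu)).
have htd := smul_rep hb (cst_rep (qw2 * qv)).
have hfg : (f * 1) * (g * 1) != 0 by rewrite !mulr1 mulf_neq0.
exists (a * ratr (qw * qu) * (g * 1) + f * 1 * (b * ratr (qw2 * qv))), ((f * 1) * (g * 1)).
split => //; split.
  split; first exact: not_etaA.
  exact: ladd_eval hsc htd (hr etU).
split; first exact: not_etaR.
rewrite ER; apply: (cls_eq1 GR).
- by rewrite (piM hQ); apply: not_etaR; rewrite mulf_neq0.
- exact: not_etaR.
- rewrite !(piM hQ); congr pi; rewrite !(ratrM hQ) !mulr1.
  have -> : (a1 * g1 * ratr qu + f1 * b1 * ratr qv) * (f * g) =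
    (a1 * f) * (g1 * ratr qu * g) + (b1 * g) * (f1 * ratr qv * f) by ring.
  rewrite Ew Ew2; ring.
Qed.

Definition liftU (S : sect V) : sect U := proj1_sig (cid (lift_ex S)).
Lemma liftU_M S : M (liftU S) S.
Proof. exact: proj2_sig (cid (lift_ex S)). Qed.
Definition gmapU (s : sect U) : sect V := proj1_sig (cid (Gmap_ex s)).
Lemma gmapU_M s : M s (gmapU s).
Proof. exact: proj2_sig (cid (Gmap_ex s)). Qed.

Definition gU (S : OS V) : quot (QX U) := qproj (QX U) (liftU S).
Definition hU (X : quot (QX U)) : OS V := gmapU (proj1_sig (cid (qproj_surj X))).

Lemma hiso_main : hiso (OS V) (quot (QX U)).
Proof.
exists gU; split.
  exists hU.
    move=> S; rewrite /hU; move: (proj2_sig (cid (qproj_surj (gU S)))).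
    move: (proj1_sig _) => b /qproj_eqU [c [hc Eb]].
    apply: K3 (gmapU_M b) _; rewrite Eb; exact: K2 (liftU_M S) hc.
  move=> X; rewrite /hU; move: (proj2_sig (cid (qproj_surj X))).
  move: (proj1_sig _) => b ->.
  exact: K1 (liftU_M _) (gmapU_M b).
split.
  move=> S T; rewrite /gU qmulU.
  apply: K1 (liftU_M _) _; exact: K4 (liftU_M S) (liftU_M T).
move=> S T; apply/seteqP; split.
  move=> Z [Rh hR <-]; apply/qaddU.
  have [c [d [r [hc [hd [hr hM]]]]]] := K5 (liftU_M S) (liftU_M T) hR.
  exists c, d, r; split => //; split => //; split => //.
  exact: K1 (liftU_M Rh) hM.
move=> Z /qaddU [c [d [r [hc [hd [hr ->]]]]]].
exists (gmapU r).
  exact: K7 (K2 (liftU_M S) hc) (K2 (liftU_M T) hd) (gmapU_M r) hr.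
exact: K1 (liftU_M _) (gmapU_M r).
Qed.
End Main.


Local Close Scope ring_scope.

Theorem proposition4p35 (A : idomainType)
  (hQ : forall n : nat, ((n.+1)%:R : A)%R \is a GRing.unit) :
  exists phi : Spec (quot (QA A)) -> Spec (ring_hs A),
    (forall p, proj1_sig (phi p) = [set a | proj1_sig p (qproj (QA A) a)]) /\
    bijective phi /\
    (forall W, zopen W <-> zopen (phi @^-1` W)) /\
    (forall U : set (Spec (ring_hs A)), zopen U -> U !=set0 ->
       hiso (OS (phi @^-1` U)) (quot (QX U))).
Proof.
exists (phiA hQ); split => //; split; first exact: phi_bij.
split; first exact: phi_open.
move=> U hU [x Ux].
have hUeta : U (geta (GA A)) by exact: open_eta hU Ux.
exact: hiso_main hUeta.
Qed.
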